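(* For every probability vector $p=(p_1,\dots,p_I)\in\mathbb R^I$ with all entries positive, the system-wide safety staffing parameter $\vartheta_p$ is given, for every $i\in\mathcal I$, by $$\vartheta_p=\frac{\sum_{j\in\mathcal J}\mathfrak d(i,j)\,\theta_j-\sum_{\ell\in\mathcal I}\mathfrak d(i,\ell)\,\hat\lambda_\ell}{\sum_{\ell\in\mathcal I}\mathfrak d(i,\ell)\,p_\ell}.$$ (In particular the right-hand side does not depend on $i$.)
   Context: Network and parameters: $\mathcal I=\{1,\dots,I\}$ (customer classes), $\mathcal J=\{1,\dots,J\}$ (server pools), and $\mathcal E\subset\mathcal I\times\mathcal J$ is a set of edges such that the bipartite graph $\mathcal G=(\mathcal I\cup\mathcal J,\mathcal E)$ is a tree. Write $i\sim j$ iff $(i,j)\in\mathcal E$, $\mathcal J(i)=\{j:i\sim j\}$, $\mathcal I(j)=\{i:i\sim j\}$. $\mathbb R^{\mathcal G}$ denotes the arrays $[\xi_{ij}]\in\mathbb R^{I\times J}$ with $\xi_{ij}=0$ whenever $i\not\sim j$, and $\mathbb R^{\mathcal G}_+$ its elements with nonnegative entries. For each $n\in\mathbb N$ there are arrival rates $\lambda^n_i>0$, service rates $\mu^n_{ij}>0$ ($i\sim j$) and pool sizes $N^n_j\in\mathbb N$, such that as $n\to\infty$: $\lambda^n_i/n\to\lambda_i>0$, $N^n_j/n\to\nu_j>0$, $\mu^n_{ij}\to\mu_{ij}>0$, $\hat\lambda^n_i:=(\lambda^n_i-n\lambda_i)/\sqrt n\to\hat\lambda_i\in\mathbb R$, $\hat\mu^n_{ij}:=\sqrt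 n(\mu^n_{ij}-\mu_{ij})\to\hat\mu_{ij}\in\mathbb R$, $\hat\nu^n_j:=\sqrt n(N^n_j/n-\nu_j)\to\hat\nu_j\in\mathbb R$. Complete resource pooling is assumed: the linear program ''minimize $\max_{j}\sum_i\xi_{ij}$ over $\xi\in\mathbb R^{\mathcal G}_+$ subject to $\sum_j\mu_{ij}\nu_j\xi_{ij}=\lambda_i$ for all $i$'' has a unique solution $\xi^*$, and it satisfies $\sum_{i}\xi^*_{ij}=1$ for all $j$ and $\xi^*_{ij}>0$ for all $i\sim j$. Put $z^*_{ij}:=\xi^*_{ij}\nu_j$ and $\theta_j:=\hat\nu_j+\sum_{i\in\mathcal I(j)}(\hat\mu_{ij}/\mu_{ij})z^*_{ij}$. SWSS parameter: for a probability vector $p\in\mathbb R^I$ with positive entries, $\vartheta_p$ is the (unique) optimal value of the linear program: maximize $\vartheta$ over $(\vartheta,\kappa)\in\mathbb R\times\mathbb R^{\mathcal G}$ subject to $\hat\lambda_i\le\sum_{j\in\mathcal J(i)}\mu_{ij}\kappa_{ij}-\vartheta p_i$ for all $i\in\mathcal I$ and $\sum_{i\in\mathcal I(j)}\kappa_{ij}=\theta_j$ for all $j\in\mathcal J$. Gains: for $i\in\mathcal I$, $j\in\mathcal J$, let $(i_1,j_1,i_2,j_2,\dots,i_m,j_m)$ be the unique shortest path in $\mathcal G$ from $i=i_1$ to $j=j_m$, and set $\mathfrak d(i,j):=\mu_{i_1j_1}\prod_{k=1}^{m-1}\mu_{i_{k+1}j_{k+1}}/\mu_{i_{k+1}j_k}$.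 For $i\ne i'$ in $\mathcal I$ with shortest path $(i_1,j_1,\dots,j_{m-1},i_m)$ from $i=i_1$ to $i'=i_m$, set $\mathfrak d(i,i'):=\prod_{k=1}^{m-1}\mu_{i_kj_k}/\mu_{i_{k+1}j_k}$; and $\mathfrak d(i,i):=1$. *)

(* Defs.v *)
From HB Require Import structures.
From mathcomp Require Import all_boot all_order all_algebra.
From mathcomp Require Import reals.
From Stdlib Require Import ClassicalEpsilon.
Set Implicit Arguments. Unset Strict Implicit. Unset Printing Implicit Defensive.
Import Order.TTheory GRing.Theory Num.Theory.
Local Open Scope ring_scope.

Section Defs.
Variables (R : realType) (I J : nat).
Variable E : 'I_I -> 'I_J -> bool.

Definition vertex := ('I_I + 'I_J)%type.

Definition adj : rel vertex := fun u v =>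
  match u, v with
  | inl i, inr j => E i j
  | inr j, inl i => E i j
  | _, _ => false
  end.

Definition is_tree : Prop :=
  (forall u v : vertex, connect adj u v) /\
  #|[set e : 'I_I * 'I_J | E e.1 e.2]| = (I + J).-1%N.

Definition in_RG (x : 'I_I -> 'I_J -> R) : Prop :=
  forall i j, ~~ E i j -> x i j = 0.

Variables (mu : 'I_I -> 'I_J -> R) (nu : 'I_J -> R) (lam : 'I_I -> R).

Definition crp_feasible (xi : 'I_I -> 'I_J -> R) : Prop :=
  in_RG xi /\ (forall i j, 0 <= xi i j) /\
  (forall i, \sum_(j < J) mu i j * nu j * xi i j = lam i).

Definition crp_objective (xi : 'I_I -> 'I_J -> R) : R :=
  \big[Num.max/0]_(j < J) \sum_(i < I) xi i j.

Definition crp_optimal (xi : 'I_I -> 'I_J -> R) : Prop :=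
  crp_feasible xi /\
  forall xi', crp_feasible xi' -> crp_objective xi <= crp_objective xi'.

Definition CRP (xi_star : 'I_I -> 'I_J -> R) : Prop :=
  crp_optimal xi_star /\
  (forall xi, crp_optimal xi -> forall i j, xi i j = xi_star i j) /\
  (forall j, \sum_(i < I) xi_star i j = 1) /\
  (forall i j, E i j -> 0 < xi_star i j).

Variables (lamhat : 'I_I -> R) (muhat : 'I_I -> 'I_J -> R) (nuhat : 'I_J -> R).

Definition theta (xi_star : 'I_I -> 'I_J -> R) (j : 'I_J) : R :=
  nuhat j + \sum_(i < I | E i j) (muhat i j / mu i j) * (xi_star i j * nu j).

Definition swss_feasible (xi_star : 'I_I -> 'I_J -> R) (p : 'I_I -> R)
    (v : R) (kappa : 'I_I -> 'I_J -> R) : Prop :=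
  in_RG kappa /\
  (forall i, lamhat i <= \sum_(j < J | E i j) mu i j * kappa i j - v * p i) /\
  (forall j, \sum_(i < I | E i j) kappa i j = theta xi_star j).

(* v is the optimal value of the SWSS LP (i.e. v = vartheta_p) *)
Definition is_swss_value (xi_star : 'I_I -> 'I_J -> R) (p : 'I_I -> R)
    (v : R) : Prop :=
  (exists kappa, swss_feasible xi_star p v kappa) /\
  (forall v' kappa, swss_feasible xi_star p v' kappa -> v' <= v).

(* A path i = i_1, j_1, i_2, j_2, ..., i_m, j_m = j is encoded as
   (j_1, [:: (i_2, j_2); ...; (i_m, j_m)]); its length parameter is m-1. *)
Fixpoint walkIJ (cur : 'I_J) (t : seq ('I_I * 'I_J)) (target : 'I_J) : bool :=
  match t with
  | [::] => cur == target
  | (i2, j2) :: t' => [&& E i2 cur, E i2 j2 & walkIJ j2 t' target]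
  end.

Definition pathIJ (i : 'I_I) (j : 'I_J) (pt : 'I_J * seq ('I_I * 'I_J)) : bool :=
  E i pt.1 && walkIJ pt.1 pt.2 j.

Definition shortest_pathIJ i j (pt : 'I_J * seq ('I_I * 'I_J)) : Prop :=
  pathIJ i j pt /\ forall pt', pathIJ i j pt' -> (size pt.2 <= size pt'.2)%N.

Fixpoint gain_tailIJ (cur : 'I_J) (t : seq ('I_I * 'I_J)) : R :=
  match t with
  | [::] => 1
  | (i2, j2) :: t' => mu i2 j2 / mu i2 cur * gain_tailIJ j2 t'
  end.

Definition gainIJ (i : 'I_I) (pt : 'I_J * seq ('I_I * 'I_J)) : R :=
  mu i pt.1 * gain_tailIJ pt.1 pt.2.

(* d(i,j), computed along the (unique) shortest path from i to j *)
Definition dIJ (i : 'I_I) (j : 'I_J) : R :=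
  gainIJ i (epsilon (inhabits (j, [::])) (shortest_pathIJ i j)).

(* A path i = i_1, j_1, i_2, ..., j_{m-1}, i_m = i' is encoded as
   [:: (j_1, i_2); ...; (j_{m-1}, i_m)]. *)
Fixpoint walkII (cur : 'I_I) (t : seq ('I_J * 'I_I)) (target : 'I_I) : bool :=
  match t with
  | [::] => cur == target
  | (j, i2) :: t' => [&& E cur j, E i2 j & walkII i2 t' target]
  end.

Definition shortest_pathII i i' (t : seq ('I_J * 'I_I)) : Prop :=
  walkII i t i' /\ forall t', walkII i t' i' -> (size t <= size t')%N.

Fixpoint gainII (cur : 'I_I) (t : seq ('I_J * 'I_I)) : R :=
  match t with
  | [::] => 1
  | (j, i2) :: t' => mu cur j / mu i2 j * gainII i2 t'
  end.

Definition dII (i i' : 'I_I) : R :=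
  if i == i' then 1
  else gainII i (epsilon (inhabits [::]) (shortest_pathII i i')).

End Defs.

(* Main.v *)
Require Import Defs.
From HB Require Import structures.
From mathcomp Require Import all_boot all_order all_algebra.
From mathcomp Require Import reals.
From mathcomp Require Import zify ring lra.
From Stdlib Require Import ClassicalEpsilon.
Set Implicit Arguments. Unset Strict Implicit. Unset Printing Implicit Defensive.
Import Order.TTheory GRing.Theory Num.Theory.
Local Open Scope ring_scope.

Section Aux.
Variables (R : realType) (I J : nat) (E : 'I_I -> 'I_J -> bool).
Variable mu : 'I_I -> 'I_J -> R.

Lemma conn_prop (P : vertex I J -> Prop) :
  (forall u v, adj E u v -> P u -> P v) ->
  forall u v, connect (adj E) u v -> P u -> P v.
Proof.
move=> HP u v /connectP [p Hp ->]; elim: p u Hp => [|x p IH] u //= /andP [Hux Hp] Pu.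
exact: (IH x Hp (HP _ _ Hux Pu)).
Qed.

Lemma sum_if_eq (T : finType) (a : T) (F : T -> R) :
  \sum_(x : T) (if a == x then F x else 0) = F a.
Proof.
rewrite -big_mkcond /= (big_pred1 a) // => x; by rewrite eq_sym.
Qed.

Lemma walkII_rcons t cur l j l2 :
  walkII E cur t l -> E l j -> E l2 j -> walkII E cur (rcons t (j, l2)) l2.
Proof.
elim: t cur => [|[j1 i2] t IH] cur /=.
  by move=> /eqP -> -> ->; rewrite eqxx.
by move=> /and3P [-> -> H] H1 H2 /=; apply: IH.
Qed.

Lemma walkII_pathIJ t cur l j :
  walkII E cur t l -> E l j -> exists pt, pathIJ E cur j pt.
Proof.
elim: t cur => [|[j1 i2] t IH] cur /=.
  by move=> /eqP -> H; exists (j, [::]); rewrite /pathIJ /= H eqxx.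
move=> /and3P [H1 H2 H3] H4; have [[j0 t0] /andP [/= H5 H6]] := IH _ H3 H4.
exists (j1, (i2, j0) :: t0); by rewrite /pathIJ /= H1 H2 H5 H6.
Qed.

Lemma ex_shortest (T : Type) (P : T -> Prop) (sz : T -> nat) :
  (exists x, P x) -> exists x, P x /\ forall y, P y -> (sz x <= sz y)%N.
Proof.
move=> [x Px].
suff: forall n x, (sz x <= n)%N -> P x -> exists x, P x /\ forall y, P y -> (sz x <= sz y)%N.
  by move=> H; exact: (H _ x (leqnn _) Px).
elim=> [|n IH] x0 Hx0 Px0.
  exists x0; split=> // y _; move: Hx0; rewrite leqn0 => /eqP ->; done.
case: (classic (exists y, P y /\ (sz y < sz x0)%N)) => [[y [Py Hy]]|Hn].
  apply: (IH y) => //; lia.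
exists x0; split=> // y Py; case: (leqP (sz x0) (sz y)) => // H.
by exfalso; apply: Hn; exists y.
Qed.

Variables (w : 'I_I -> R) (c : 'I_J -> R).
Hypothesis wpos : forall l, 0 < w l.
Hypothesis cpos : forall j, 0 < c j.
Hypothesis wc : forall l j, E l j -> w l * mu l j = c j.

Lemma mu_eq l j : E l j -> mu l j = c j / w l.
Proof.
move=> H; rewrite -(wc H); have := wpos l; rewrite lt0r => /andP [h _]; field; done.
Qed.

Lemma gain_tail t cur j : walkIJ E cur t j -> gain_tailIJ mu cur t = c j / c cur.
Proof.
elim: t cur => [|[i2 j2] t IH] cur /=.
  by move=> /eqP ->; rewrite divff // gt_eqF.
move=> /and3P [H1 H2 H3]; rewrite (IH _ H3) (mu_eq H1) (mu_eq H2).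
have := wpos i2; have := cpos cur; have := cpos j2.
rewrite !lt0r => /andP [h1 _] /andP [h2 _] /andP [h3 _]; field.
by rewrite h1 h2 h3.
Qed.

Lemma gainIJ_eq i j pt : pathIJ E i j pt -> gainIJ mu i pt = c j / w i.
Proof.
case: pt => j1 t /andP [/= H1 H2]; rewrite /gainIJ /= (gain_tail H2) (mu_eq H1).
have := wpos i; have := cpos j1.
rewrite !lt0r => /andP [h1 _] /andP [h2 _]; field.
by rewrite h1 h2.
Qed.

Lemma gainII_eq t cur l : walkII E cur t l -> gainII mu cur t = w l / w cur.
Proof.
elim: t cur => [|[j i2] t IH] cur /=.
  by move=> /eqP ->; rewrite divff // gt_eqF.
move=> /and3P [H1 H2 H3]; rewrite (IH _ H3) (mu_eq H1) (mu_eq H2).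
have := wpos i2; have := cpos j; have := wpos cur.
rewrite !lt0r => /andP [h1 _] /andP [h2 _] /andP [h3 _]; field.
by rewrite h1 h2 h3.
Qed.

Hypothesis conn : forall u v, connect (adj E) u v.

Lemma reach i : (forall j, exists pt, pathIJ E i j pt) /\
                (forall l, exists t, walkII E i t l).
Proof.
pose P (v : vertex I J) := match v with
  | inl l => exists t, walkII E i t l
  | inr j => exists t l, walkII E i t l /\ E l j end.
have HP : forall v, P v.
  move=> v; apply: (@conn_prop P _ (inl i) v (conn _ _)); last first.
    by exists [::]; rewrite /= eqxx.
  case=> [l|j] [l'|j'] //= H.
    by move=> [t Ht]; exists t, l.
  move=> [t [l [Ht Hl]]]; exists (rcons t (j, l')); exact: walkII_rcons Ht Hl H.
split=> [j|l]; last exact: (HP (inl l)).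
have [t [l [Ht Hl]]] := HP (inr j); exact: walkII_pathIJ Ht Hl.
Qed.

Lemma dIJ_eq i j : dIJ E mu i j = c j / w i.
Proof.
have [pt Hpt] := (reach i).1 j.
have [x Hx] := @ex_shortest _ (fun pt => pathIJ E i j pt) (fun pt => size pt.2) (ex_intro _ pt Hpt).
have Hs : exists x, shortest_pathIJ E i j x by exists x.
rewrite /dIJ; set y := epsilon _ _.
have [Hy _] : shortest_pathIJ E i j y by exact: epsilon_spec.
exact: gainIJ_eq.
Qed.

Lemma dII_eq i l : dII E mu i l = w l / w i.
Proof.
rewrite /dII; case: eqP => [->|_]; first by rewrite divff // gt_eqF.
have [t Ht] := (reach i).2 l.
have [x Hx] := @ex_shortest _ (fun t => walkII E i t l) (@size _) (ex_intro _ t Ht).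
have Hs : exists x, shortest_pathII E i l x by exists x.
set y := epsilon _ _.
have [Hy _] : shortest_pathII E i l y by exact: epsilon_spec.
exact: gainII_eq.
Qed.

End Aux.
Section LA.
Variables (R : realType) (I J : nat) (E : 'I_I -> 'I_J -> bool).
Variable mu : 'I_I -> 'I_J -> R.
Hypothesis mupos : forall i j, E i j -> 0 < mu i j.
Hypothesis conn : forall u v, connect (adj E) u v.
Hypothesis Ecount : #|[set e : 'I_I * 'I_J | E e.1 e.2]| = (I + J).-1%N.
Variable i0 : 'I_I.
Hypothesis J0 : (0 < J)%N.

Definition Es := [set e : 'I_I * 'I_J | E e.1 e.2].
Definition ne := #|Es|.
Definition ev (k : 'I_ne) : 'I_I * 'I_J := enum_val k.

Lemma evE k : E (ev k).1 (ev k).2.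
Proof. have := enum_valP k; by rewrite inE. Qed.

Definition A1 : 'M[R]_(ne, I) := \matrix_(k, i) (if (ev k).1 == i then mu i (ev k).2 else 0).
Definition A2 : 'M[R]_(ne, J) := \matrix_(k, j) (if (ev k).2 == j then 1 else 0).
Definition A : 'M[R]_(ne, I + J) := row_mx A1 A2.

Definition ispot (u : 'rV[R]_(I + J)) :=
  forall i j, E i j -> mu i j * u 0 (lshift J i) + u 0 (rshift I j) = 0.

Lemma sum_if_eq' (T : finType) (a : T) (F : T -> R) :
  \sum_(x : T) (if a == x then F x else 0) = F a.
Proof. rewrite -big_mkcond /= (big_pred1 a) // => x; by rewrite eq_sym. Qed.

Lemma sum_mul_if (T : finType) (a : T) (F G : T -> R) :
  \sum_(x : T) F x * (if a == x then G x else 0) = F a * G a.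
Proof.
rewrite -(sum_if_eq' a (fun x => F x * G x)); apply: eq_bigr => x _.
by case: eqP => _; rewrite ?mulr0.
Qed.

Lemma pot_of u : u *m A^T = 0 -> ispot u.
Proof.
move=> H i j Eij.
have Hk : (i, j) \in Es by rewrite inE.
have [k evk] : exists k : 'I_ne, ev k = (i, j).
  by exists (enum_rank_in Hk (i, j)); rewrite /ev enum_rankK_in.
have := congr1 (fun M : 'M[R]_(1, ne) => M 0 k) H; rewrite !mxE big_split_ord /=.
under eq_bigr do rewrite mxE /A row_mxEl /A1 mxE evk /=.
under [X in _ + X = _]eq_bigr do rewrite mxE /A row_mxEr /A2 mxE evk /=.
rewrite !sum_mul_if mulr1 mulrC.
by [].
Qed.

Definition val (u : 'rV[R]_(I + J)) (v : vertex I J) : R :=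
  match v with inl i => u 0 (lshift J i) | inr j => u 0 (rshift I j) end.

Lemma pot_zero u : ispot u -> u 0 (lshift J i0) = 0 -> u = 0.
Proof.
move=> Hu H0.
have Hv : forall v, val u v = 0.
  move=> v; apply: (conn_prop (P := fun v => val u v = 0) _ (conn (inl i0) v)) => //.
  case=> [l|j] [l'|j'] //= Hadj.
    have := Hu _ _ Hadj; move=> h h0; move: h; rewrite h0 mulr0 add0r; done.
  move=> h0; have := Hu _ _ Hadj; rewrite h0 addr0 => /eqP; rewrite mulf_eq0.
  by case/orP=> [/eqP h|/eqP //]; have := mupos Hadj; rewrite h ltxx.
apply/rowP => v; rewrite mxE.
case: (split_ordP v) => [a ->|b ->].
  exact: (Hv (inl a)).
exact: (Hv (inr b)).
Qed.

Lemma mul_delta m (M : 'M[R]_(m, I + J)) a v :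
  (M *m (delta_mx v 0 : 'cV[R]_(I + J))) a 0 = M a v.
Proof.
rewrite mxE (bigD1 v) //= mxE !eqxx mulr1 big1 ?addr0 // => x /negbTE h.
by rewrite mxE h mulr0.
Qed.

Lemma rankK : (\rank (kermx A^T) <= 1)%N.
Proof.
set K := kermx A^T.
set K' := row_base K.
pose d : 'cV[R]_(I + J) := delta_mx (lshift J i0) 0.
pose f := K' *m d.
have HK' : K' *m A^T = 0 by apply/sub_kermxP; rewrite eq_row_base.
have HM : kermx f *m K' = 0.
  apply/row_matrixP => a; rewrite row0.
  apply: pot_zero.
    by apply: pot_of; rewrite -row_mul -mulmxA HK' mulmx0 row0.
  have := congr1 (fun M : 'M[R]_(_, 1) => M a 0) (mulmx_ker f).
  rewrite /f mulmxA mul_delta.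
  by rewrite !mxE => ->.
have Hk0 : kermx f = 0 by apply: (row_free_inj (row_base_free K)); rewrite /= HM mul0mx.
have := mxrank_ker f; rewrite Hk0 mxrank0 => h.
have := rank_leq_col f; lia.
Qed.

Lemma rankA : \rank A = (I + J).-1.
Proof.
have := rankK; rewrite mxrank_ker mxrank_tr => h.
have h2 : (\rank A <= (I + J).-1)%N.
  by apply: leq_trans (rank_leq_row A) _; rewrite /ne /Es Ecount.
have : (0 < I)%N by case: i0 => ? ?; lia.
lia.
Qed.

Lemma exists_pot : exists (w : 'I_I -> R) (c : 'I_J -> R),
  (forall l, 0 < w l) /\ (forall j, 0 < c j) /\
  (forall l j, E l j -> w l * mu l j = c j).
Proof.
set K := kermx A^T.
have HK1 : \rank K = 1%N.
  rewrite /K mxrank_ker mxrank_tr rankA.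
  have : (0 < I)%N by case: i0 => ? ?; lia.
  lia.
have HK0 : K != 0 by rewrite -mxrank_eq0 HK1.
have [a [v Hv]] : exists a v, K a v != 0.
  case: (classic (exists a v, K a v != 0)) => // Hn; exfalso.
  move/eqP: HK0; apply; apply/matrixP => a v; rewrite [RHS]mxE; apply/eqP.
  by apply/negPn/negP => h; apply: Hn; exists a, v.
set u0 := row a K.
have Hp : ispot u0 by apply: pot_of; rewrite /u0 -row_mul mulmx_ker row0.
have Hs : u0 0 (lshift J i0) != 0.
  apply/negP => /eqP h; have := pot_zero Hp h => h'.
  have e : u0 0 v = K a v by rewrite /u0 mxE.
  by move: Hv; rewrite -e h' mxE eqxx.
set s := u0 0 (lshift J i0).
pose w l := u0 0 (lshift J l) / s.
pose c j := - u0 0 (rshift I j) / s.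
have wc : forall l j, E l j -> w l * mu l j = c j.
  move=> l j Elj; have := Hp _ _ Elj; rewrite /w /c => h.
  have -> : u0 0 (rshift I j) = - (mu l j * u0 0 (lshift J l)) by apply/eqP; rewrite -addr_eq0 addrC h.
  by field.
pose P (v : vertex I J) := match v with inl l => 0 < w l | inr j => 0 < c j end.
have HP : forall v, P v.
  move=> v'; apply: (conn_prop (P := P) _ (conn (inl i0) v')); last first.
    by rewrite /P /w divff.
  case=> [l|j] [l'|j'] //= Hadj.
    by rewrite -(wc _ _ Hadj) => h; apply: mulr_gt0 => //; exact: mupos.
  by rewrite -(wc _ _ Hadj) pmulr_lgt0 //; exact: mupos.
exists w, c; split; first by move=> l; exact: (HP (inl l)).
by split; first by move=> j; exact: (HP (inr j)).
Qed.

Lemma sum_if_mul (T : finType) (a : T) (F G : T -> R) :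
  \sum_(x : T) (if a == x then F x else 0) * G x = F a * G a.
Proof.
rewrite -(sum_if_eq' a (fun x => F x * G x)); apply: eq_bigr => x _.
by case: eqP => _; rewrite ?mul0r.
Qed.

Lemma surj (w : 'I_I -> R) (c : 'I_J -> R) :
  (forall l, 0 < w l) -> (forall l j, E l j -> w l * mu l j = c j) ->
  forall (b : 'I_I -> R) (th : 'I_J -> R),
  \sum_(l < I) w l * b l = \sum_(j < J) c j * th j ->
  exists kappa : 'I_I -> 'I_J -> R, in_RG E kappa /\
   (forall l, \sum_(j < J | E l j) mu l j * kappa l j = b l) /\
   (forall j, \sum_(l < I | E l j) kappa l j = th j).
Proof.
move=> wpos wc b th Hbal.
pose x : 'cV[R]_(I + J) := col_mx (\col_l w l) (\col_j - c j).
have HAx : A *m x = 0.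
  rewrite /A /x mul_row_col; apply/matrixP => k z; rewrite !mxE.
  under eq_bigr do rewrite !mxE.
  under [X in _ + X = _]eq_bigr do rewrite !mxE.
  rewrite !sum_if_mul mul1r -(wc _ _ (evE k)); ring.
have Hx0 : \rank x = 1%N.
  apply/eqP; rewrite eqn_leq rank_leq_col lt0n mxrank_eq0.
  apply/negP => /eqP h; have := congr1 (fun M : 'cV[R]_(I + J) => M (lshift J i0) 0) h.
  rewrite /x col_mxEu !mxE => h'; have := wpos i0; by rewrite h' ltxx.
have HrK : \rank (kermx x) = (I + J).-1 by rewrite mxrank_ker Hx0 subn1.
have Hsub : (A <= kermx x)%MS by apply/sub_kermxP.
have Heq : (kermx x <= A)%MS.
  by have := (mxrank_leqif_sup Hsub).2; rewrite rankA HrK eqxx => <-.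
pose t : 'rV[R]_(I + J) := row_mx (\row_l b l) (\row_j th j).
have Ht : (t <= kermx x)%MS.
  apply/sub_kermxP; rewrite /t /x mul_row_col; apply/matrixP => z z'; rewrite !mxE.
  under eq_bigr do rewrite !mxE.
  under [X in _ + X = _]eq_bigr do rewrite !mxE.
  rewrite -[X in X + _ = _](@eq_bigr _ _ _ _ _ _ (fun l => w l * b l)) => [|l _]; last by rewrite mulrC.
  rewrite Hbal -big_split /= big1 // => j _; ring.
have [D HD] := submxP (submx_trans Ht Heq).
move: HD; rewrite /t /A mul_mx_row => /eq_row_mx [H1 H2].
pose kappa l j := \sum_(k < ne | ev k == (l, j)) D 0 k.
exists kappa; split.
  move=> l j nE; rewrite /kappa big1 // => k /eqP ek; have := evE k; rewrite ek /= => h.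
  by rewrite h in nE.
split.
  move=> l; have := congr1 (fun M : 'rV[R]_I => M 0 l) H1; rewrite !mxE => ->.
  rewrite big_mkcond /=.
  rewrite (eq_bigr (fun j => \sum_(k < ne) (if ev k == (l, j) then mu l j * D 0 k else 0))).
    rewrite exchange_big /=; apply: eq_bigr => k _; rewrite mxE.
    case: (ev k) => l' j'; case: (eqVneq l' l) => [->|hne].
      under eq_bigr do rewrite xpair_eqE eqxx /=.
      by rewrite sum_if_eq' mulrC.
    rewrite big1 ?mulr0 // => j _; by rewrite xpair_eqE (negbTE hne).
  move=> j _; rewrite /kappa big_distrr /= big_mkcond /=.
  case: ifP => Elj.
    by apply: eq_bigr => k _; case: ifP.
  rewrite big1 // => k _; case: eqP => // ek; have := evE k; by rewrite ek /= Elj.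
move=> j; have := congr1 (fun M : 'rV[R]_J => M 0 j) H2; rewrite !mxE => ->.
rewrite big_mkcond /=.
rewrite (eq_bigr (fun l => \sum_(k < ne) (if ev k == (l, j) then D 0 k else 0))).
  rewrite exchange_big /=; apply: eq_bigr => k _; rewrite mxE.
  case: (ev k) => l' j'; case: (eqVneq j' j) => [->|hne].
    under eq_bigr do rewrite xpair_eqE eqxx andbT.
    by rewrite sum_if_eq' mulr1.
  rewrite mulr0 big1 // => l _; by rewrite xpair_eqE (negbTE hne) andbF.
move=> l _; rewrite /kappa big_mkcond /=.
case: ifP => Elj; first by apply: eq_bigr.
rewrite big1 // => k _; case: eqP => // ek; have := evE k; by rewrite ek /= Elj.
Qed.
End LA.
Unset Implicit Arguments.

Theorem theorem2 (R : realType) (I J : nat) (E : 'I_I -> 'I_J -> bool)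
  (mu : 'I_I -> 'I_J -> R) (nu : 'I_J -> R) (lam : 'I_I -> R)
  (lamhat : 'I_I -> R) (muhat : 'I_I -> 'I_J -> R) (nuhat : 'I_J -> R)
  (xi_star : 'I_I -> 'I_J -> R) :
  (0 < I)%N -> (0 < J)%N ->
  is_tree E ->
  (forall i, 0 < lam i) -> (forall j, 0 < nu j) ->
  (forall i j, E i j -> 0 < mu i j) ->
  CRP E mu nu lam xi_star ->
  forall p : 'I_I -> R,
    (forall i, 0 < p i) -> \sum_(i < I) p i = 1 ->
    forall i : 'I_I,
      is_swss_value E mu nu lamhat muhat nuhat xi_star p
        ((\sum_(j < J) dIJ E mu i j * theta E mu nu muhat nuhat xi_star j
          - \sum_(l < I) dII E mu i l * lamhat l)
         / (\sum_(l < I) dII E mu i l * p l)).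
Proof.
move=> I0 J0 [conn Ecount] _ _ mupos _ p ppos _ i.
have [w [c [wpos [cpos wc]]]] := exists_pot mupos conn Ecount i J0.
set th := theta E mu nu muhat nuhat xi_star.
set Sc := \sum_(j < J) c j * th j.
set Sl := \sum_(l < I) w l * lamhat l.
set Sp := \sum_(l < I) w l * p l.
have wi0 : w i != 0 by rewrite gt_eqF.
have Sp0 : 0 < Sp.
  rewrite /Sp (bigD1 i) //=.
  have h1 : 0 < w i * p i by apply: mulr_gt0.
  have h2 : 0 <= \sum_(l < I | l != i) w l * p l.
    by apply: sumr_ge0 => l _; apply: mulr_ge0; apply: ltW.
  lra.
have -> : (\sum_(j < J) dIJ E mu i j * th j - \sum_(l < I) dII E mu i l * lamhat l)
         / (\sum_(l < I) dII E mu i l * p l) = (Sc - Sl) / Sp.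
  have e1 : \sum_(j < J) dIJ E mu i j * th j = Sc / w i.
    rewrite /Sc big_distrl /=; apply: eq_bigr => j _.
    by rewrite (dIJ_eq wpos cpos wc conn); field.
  have e2 : \sum_(l < I) dII E mu i l * lamhat l = Sl / w i.
    rewrite /Sl big_distrl /=; apply: eq_bigr => l _.
    by rewrite (dII_eq wpos cpos wc conn); field.
  have e3 : \sum_(l < I) dII E mu i l * p l = Sp / w i.
    rewrite /Sp big_distrl /=; apply: eq_bigr => l _.
    by rewrite (dII_eq wpos cpos wc conn); field.
  rewrite e1 e2 e3; field.
  by rewrite wi0 gt_eqF.
have key : forall kappa : 'I_I -> 'I_J -> R,
    \sum_(l < I) w l * (\sum_(j < J | E l j) mu l j * kappa l j) =
    \sum_(j < J) c j * (\sum_(l < I | E l j) kappa l j).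
  move=> kappa.
  under eq_bigr do rewrite big_distrr big_mkcond /=.
  rewrite exchange_big /=; apply: eq_bigr => j _.
  rewrite big_distrr [RHS]big_mkcond /=; apply: eq_bigr => l _.
  by case: ifP => // Elj; rewrite -(wc _ _ Elj) mulrA.
split.
  pose b l := lamhat l + (Sc - Sl) / Sp * p l.
  have Hbal : \sum_(l < I) w l * b l = \sum_(j < J) c j * th j.
    rewrite /b.
    under eq_bigr do rewrite mulrDr.
    rewrite big_split /= -/Sl.
    under eq_bigr do rewrite mulrCA.
    rewrite -big_distrr /= -/Sp -/Sc; field; by rewrite gt_eqF.
  have [kappa [HRG [Hrow Hcol]]] := surj mupos conn Ecount i J0 wpos wc Hbal.
  exists kappa; split => //; split => // l.
  rewrite Hrow /b; lra.
move=> v' kappa [_ [Hineq Hcol]].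
have h : Sl <= Sc - v' * Sp.
  have -> : Sc - v' * Sp = \sum_(l < I) w l * (\sum_(j < J | E l j) mu l j * kappa l j - v' * p l).
    under eq_bigr do rewrite mulrBr.
    rewrite sumrB key.
    have -> : \sum_(j < J) c j * (\sum_(l < I | E l j) kappa l j) = Sc.
      by apply: eq_bigr => j _; rewrite Hcol.
    congr (_ - _); rewrite /Sp big_distrr /=; apply: eq_bigr => l _; ring.
  apply: ler_sum => l _; apply: ler_wpM2l; first exact: ltW.
  exact: Hineq.
rewrite ler_pdivlMr //; lra.
Qed.
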